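(* Let $\mathbb M=(M,d)$ be an unbounded metric space whose group of isometries $\mathrm{Aut}(\mathbb M)$ acts transitively on $M$. Suppose that for some $t\in\mathbb{R}_+^*$ the set $\mathrm{spec}(\mathbb M)\cap[t,+\infty)$ is uncountable and every bounded subspace of $\mathbb M$ is $t$-totally bounded. Then $$\mathrm{age}_t(\mathbb M):=\{\text{isometry type of }\mathbb M_{\restriction X}: X\subseteq M\text{ finite},\ d(\mathbb M_{\restriction X})\ge t\}$$ is an ideal contained in $\mathrm{age}(\mathbb M)$ which is not representable.
   Context: For a metric space $\mathbb M=(M,d)$: $\mathrm{spec}(\mathbb M)=\{d(x,y):x,y\in M\}$; $d(\mathbb M):=\inf(\mathrm{spec}(\mathbb M)\setminus\{0\})$, with $d(\mathbb M)=+\infty$ if $|M|\le 1$; $\mathbb M_{\restriction X}$ is the subspace on $X$. $\omega_t(\mathbb M):=\sup\{|X|:X\subseteq M,\ d(\mathbb M_{\restriction X})\ge t\}$, and $\mathbb M$ is $t$-totally bounded if $\omega_t(\mathbb M)$ is finite. Finite metric spaces are considered up to isometry and ordered by isometric embeddability; $\mathrm{age}(\mathbb M)$ is the set of isometry types of finite subspaces of $\mathbb M$. An ideal is a non-empty, downward closed, up-directed set of such isometry types; it is representable if it equals $\mathrm{age}(\mathbb M')$ for some metric space $\mathbb M'$. *)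

(* Defs.v *)
From Stdlib Require Import Reals List.
From mathcomp Require Import ssreflect ssrfun ssrbool eqtype ssrnat seq fintype.
Local Open Scope R_scope.
Set Implicit Arguments.
Unset Strict Implicit.
Unset Printing Implicit Defensive.

Definition is_metric (T : Type) (d : T -> T -> R) : Prop :=
  (forall x y, d x y = 0 <-> x = y) /\
  (forall x y, d x y = d y x) /\
  (forall x y z, (d x z <= d x y + d y z)).

Definition spec (T : Type) (d : T -> T -> R) : R -> Prop :=
  fun r => exists x y, d x y = r.

Definition unbounded (T : Type) (d : T -> T -> R) : Prop :=
  forall r : R, exists x y, (r < d x y).

Definition is_auto (T : Type) (d : T -> T -> R) (f : T -> T) : Prop :=
  bijective f /\ forall x y, d (f x) (f y) = d x y.

Definition aut_transitive (T : Type) (d : T -> T -> R) : Prop :=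
  forall x y : T, exists f, is_auto d f /\ f x = y.

Definition countable_set (A : R -> Prop) : Prop :=
  exists g : R -> nat, forall a b, A a -> A b -> g a = g b -> a = b.

Definition bounded_subset (T : Type) (d : T -> T -> R) (X : T -> Prop) : Prop :=
  exists r : R, forall x y, X x -> X y -> (d x y <= r).

(* d(M|X) >= t, for a finite X given as a duplicate-free list:
   every two distinct points are at distance >= t (the infimum of nonzero
   distances is >= t; vacuous if |X| <= 1 since then d = +oo). *)
Definition separated (T : Type) (d : T -> T -> R) (t : R) (l : list T) : Prop :=
  forall x y, In x l -> In y l -> x <> y -> (t <= d x y).

(* omega_t(M|X) is finite: a uniform bound on the size of t-separated
   subsets of X (an infinite t-separated subset would have finite
   t-separated subsets of every size). *)
Definition t_totally_bounded (T : Type) (d : T -> T -> R) (t : R) (X : T -> Prop) : Prop :=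
  exists N : nat, forall l : list T, NoDup l -> (forall x, In x l -> X x) ->
    separated d t l -> (length l <= N)%coq_nat.

Record finms := FinMS {
  fsize : nat;
  fdist : 'I_fsize -> 'I_fsize -> R;
  fmetric : is_metric fdist }.

Definition embeds_in (A : finms) (T : Type) (d : T -> T -> R) : Prop :=
  exists f : 'I_(fsize A) -> T, injective f /\
    forall i j, d (f i) (f j) = fdist i j.

Definition emb (A B : finms) : Prop := embeds_in A (@fdist B).

Definition isom (A B : finms) : Prop :=
  exists f : 'I_(fsize A) -> 'I_(fsize B), bijective f /\
    forall i j, fdist (f i) (f j) = fdist i j.

(* A class of isometry types, as an isometry-invariant predicate on finms. *)
Definition iso_invariant (P : finms -> Prop) : Prop :=
  forall A B, isom A B -> P A -> P B.

Definition ideal (P : finms -> Prop) : Prop :=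
  iso_invariant P /\
  (exists A, P A) /\
  (forall A B, emb A B -> P B -> P A) /\
  (forall A B, P A -> P B -> exists C, P C /\ emb A C /\ emb B C).

Definition age (T : Type) (d : T -> T -> R) : finms -> Prop :=
  fun A => embeds_in A d.

Definition age_t (T : Type) (d : T -> T -> R) (t : R) : finms -> Prop :=
  fun A => embeds_in A d /\
    forall i j : 'I_(fsize A), i <> j -> (t <= fdist i j).

Definition representable (P : finms -> Prop) : Prop :=
  exists (T' : Type) (d' : T' -> T' -> R), is_metric d' /\
    forall A, P A <-> age d' A.

(* Main.v *)
Require Import Defs.
From Stdlib Require Import Reals List Lra ClassicalEpsilon Classical Cantor.
From mathcomp Require Import ssreflect ssrfun ssrbool eqtype ssrnat seq fintype.
Local Open Scope R_scope.
Set Implicit Arguments.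
Unset Strict Implicit.

Lemma metric_pull (T : Type) (d : T -> T -> R) (Hd : is_metric d) n (f : 'I_n -> T)
  (Hf : injective f) : is_metric (fun i j => d (f i) (f j)).
Proof.
case: Hd => [H0 [Hs Ht]]; split; [|split].
- move=> x y; split; [move/H0; apply: Hf | by move=> ->; apply/H0].
- by move=> x y; apply: Hs.
- by move=> x y z; apply: Ht.
Qed.

Definition fms_of (T : Type) (d : T -> T -> R) (Hd : is_metric d) n (f : 'I_n -> T)
  (Hf : injective f) : finms := @FinMS n _ (metric_pull Hd Hf).

Lemma fms_of_embeds (T : Type) (d : T -> T -> R) (Hd : is_metric d) n (f : 'I_n -> T)
  (Hf : injective f) : embeds_in (fms_of Hd Hf) d.
Proof. by exists f. Qed.

Lemma fms_of_age_t (T : Type) (d : T -> T -> R) t (Hd : is_metric d) n (f : 'I_n -> T)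
  (Hf : injective f) : (forall i j, i <> j -> t <= d (f i) (f j)) -> age_t d t (fms_of Hd Hf).
Proof. by move=> H; split; [apply: fms_of_embeds|]. Qed.

Definition lfun (T : Type) (x0 : T) (l : list T) : 'I_(length l) -> T :=
  fun i => List.nth (nat_of_ord i) l x0.
Arguments lfun {T} x0 l i.

Lemma lfun_inj (T : Type) (x0 : T) (l : list T) : NoDup l -> injective (lfun x0 l).
Proof.
move=> /(NoDup_nth l x0) H i j E; apply: ord_inj; apply: H => //; apply/ltP; apply: ltn_ord.
Qed.

Lemma lfun_In (T : Type) (x0 : T) (l : list T) i : In (lfun x0 l i) l.
Proof. apply: nth_In; apply/ltP; apply: ltn_ord. Qed.

Lemma bound_fin n (h : 'I_n -> R) : exists M, forall i, h i <= M.
Proof.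
elim: n h => [|n IH] h.
- by exists 0; case.
- have [M HM] := IH (fun i => h (widen_ord (leqnSn n) i)).
  exists (Rmax M (h ord_max)) => i.
  case: (ltnP i n) => Hi.
  + have -> : i = widen_ord (leqnSn n) (Ordinal Hi) by apply: ord_inj.
    apply: Rle_trans (HM _) (Rmax_l _ _).
  + have -> : i = ord_max by apply: ord_inj; apply/eqP; rewrite eqn_leq Hi -ltnS ltn_ord.
    apply: Rmax_r.
Qed.

Lemma length_size (A : Type) (s : list A) : length s = size s.
Proof. by elim: s => //= x s ->. Qed.

Lemma uniq_NoDup (A : eqType) (s : seq A) : uniq s -> NoDup s.
Proof.
elim: s => [|x s IH] /=; first by constructor.
move/andP=> [Hx Hs]; constructor; last by apply: IH.
move=> Hin; move/negP: Hx; apply; elim: s Hin {IH Hs} => //= y s IH [->|H].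
- by rewrite inE eqxx.
- by rewrite inE IH ?orbT.
Qed.

Lemma age_t_iso (T : Type) (d : T -> T -> R) t : iso_invariant (age_t d t).
Proof.
move=> A B [f [[f' fK f'K] Hf]] [[g [Hg Hgd]] Hs]; split.
- exists (fun i => g (f' i)); split.
  + by move=> x y /Hg E; rewrite -(f'K x) -(f'K y) E.
  + by move=> i j; rewrite Hgd -Hf !f'K.
- move=> i j Hij; rewrite -(f'K i) -(f'K j) Hf; apply: Hs => E; apply: Hij.
  by rewrite -(f'K i) -(f'K j) E.
Qed.

Lemma age_t_down (T : Type) (d : T -> T -> R) t A B : emb A B -> age_t d t B -> age_t d t A.
Proof.
move=> [f [Hf Hfd]] [[g [Hg Hgd]] Hs]; split.
- exists (fun i => g (f i)); split.
  + by move=> x y /Hg /Hf.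
  + by move=> i j; rewrite Hgd Hfd.
- move=> i j Hij; rewrite -Hfd; apply: Hs => /Hf; exact: Hij.
Qed.

Lemma age_t_single (T : Type) (d : T -> T -> R) t (Hd : is_metric d) (x : T) :
  age_t d t (fms_of Hd (@lfun_inj T x [:: x] (NoDup_cons x (@List.in_nil T x) (NoDup_nil T)))).
Proof.
apply: fms_of_age_t => i j Hij; exfalso; apply: Hij; apply: ord_inj.
by case: i j => [[|i] Hi] [[|j] Hj].
Qed.

Lemma far_point (T : Type) (d : T -> T -> R) (Hd : is_metric d) (Hu : unbounded d) (p : T) (r : R) :
  exists z, r < d p z.
Proof.
case: Hd => [H0 [Hs Ht]].
have [x [y Hxy]] := Hu (2 * r).
have := Ht x p y; rewrite (Hs x p) => H.
case: (Rlt_or_le r (d p x)) => H1; first by exists x.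
exists y; lra.
Qed.

Lemma age_t_join (T : Type) (d : T -> T -> R) t (Hd : is_metric d) (Hu : unbounded d)
  (Htr : aut_transitive d) (Ht0 : 0 < t) A B :
  age_t d t A -> age_t d t B -> exists C, age_t d t C /\ emb A C /\ emb B C.
Proof.
move=> [[fA [HfA HdA]] HsA] [[fB [HfB HdB]] HsB].
have [p _] := Hu 0.
have [MA HMA] := bound_fin (fun i => d p (fA i)).
have [MB HMB] := bound_fin (fun i => d p (fB i)).
have [z Hz] := far_point Hd Hu p (MA + MB + t).
have [phi [[[phi' phiK phi'K] Hphi] Hpz]] := Htr p z.
have Hd' := Hd; case: Hd' => [H0 [Hs Htr3]].
have Hfar : forall i j, t < d (fA i) (phi (fB j)).
  move=> i j.
  have h1 := Htr3 p (fA i) z.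
  have h2 := Htr3 (fA i) (phi (fB j)) z.
  have h3 : d (phi (fB j)) z = d p (fB j) by rewrite -Hpz Hphi Hs.
  have := HMA i; have := HMB j; simpl; lra.
pose g (k : 'I_(fsize A + fsize B)) : T :=
  match split k with inl i => fA i | inr j => phi (fB j) end.
have Hg : injective g.
  move=> k1 k2; rewrite /g.
  case: (split_ordP k1) => [i1 -> | j1 ->]; case: (split_ordP k2) => [i2 -> | j2 ->].
  - by move/HfA ->.
  - move=> E; have := Hfar i1 j2; rewrite E (proj2 (H0 _ _) erefl); lra.
  - move=> E; have := Hfar i2 j1; rewrite -E (proj2 (H0 _ _) erefl); lra.
  - move=> E; have : fB j1 = fB j2 by rewrite -(phiK (fB j1)) E phiK.
    by move/HfB ->.
exists (fms_of Hd Hg); split; [|split].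
- apply: fms_of_age_t => k1 k2; rewrite /g.
  case: (split_ordP k1) => [i1 -> | j1 ->]; case: (split_ordP k2) => [i2 -> | j2 ->] Hne.
  + rewrite HdA; apply: HsA => E; apply: Hne; by rewrite E.
  + by apply: Rlt_le; apply: Hfar.
  + by rewrite Hs; apply: Rlt_le; apply: Hfar.
  + rewrite Hphi HdB; apply: HsB => E; apply: Hne; by rewrite E.
- exists (lshift (fsize B)); split; first exact: lshift_inj.
  move=> i j /=; rewrite /g.
  case: (split_ordP (lshift _ i)) => [i1 /lshift_inj <- | j1 /eqP]; last by rewrite eq_lrshift.
  case: (split_ordP (lshift _ j)) => [j1 /lshift_inj <- | j2 /eqP]; last by rewrite eq_lrshift.
  by [].
- exists (@rshift (fsize A) (fsize B)); split; first exact: rshift_inj.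
  move=> i j /=; rewrite /g.
  case: (split_ordP (rshift _ i)) => [i1 /eqP | i1 /rshift_inj <-]; first by rewrite eq_rlshift.
  case: (split_ordP (rshift _ j)) => [j1 /eqP | j1 /rshift_inj <-]; first by rewrite eq_rlshift.
  by rewrite Hphi.
Qed.

Lemma ball_bound (T : Type) (d : T -> T -> R) t (Hd : is_metric d)
  (Htr : aut_transitive d)
  (Htb : forall X : T -> Prop, bounded_subset d X -> t_totally_bounded d t X)
  (T' : Type) (d' : T' -> T' -> R) (Hd' : is_metric d')
  (Hrep : forall A, age_t d t A <-> age d' A) (x0 : T) (a : T') (k : nat) :
  exists K, forall l, NoDup l -> (forall y, In y l -> d' a y <= INR k) ->
    (length l <= K)%coq_nat.
Proof.
have Hdd := Hd; case: Hdd => [H0 [Hs Htri]].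
have Hdd' := Hd'; case: Hdd' => [H0' [Hs' Htri']].
pose X := fun z => d x0 z <= 2 * INR k.
have [N HN] : t_totally_bounded d t X.
  apply: Htb; exists (4 * INR k) => z w; rewrite /X => Hz Hw.
  have := Htri z x0 w; rewrite (Hs z x0); lra.
exists N => l Hl Hball.
have Hi := @lfun_inj T' a l Hl.
have [[f [Hf Hfd]] Hsep] := (Hrep (fms_of Hd' Hi)).2 (fms_of_embeds Hd' Hi).
simpl in f, Hf, Hfd, Hsep.
case E: (length l) => [|n]; first by apply: Nat.le_0_l.
have Hlt : (0 < length l)%N by rewrite E.
pose i0 := Ordinal Hlt.
have [phi [[[phi' phiK phi'K] Hphi] Hpz]] := Htr (f i0) x0.
pose l2 := List.map (fun i => phi (f i)) (enum 'I_(length l)).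
have Hlen : length l2 = length l by rewrite /l2 length_map length_size size_enum_ord.
rewrite -E -Hlen; apply: HN.
- apply: NoDup_map_NoDup_ForallPairs; last by apply: uniq_NoDup; apply: enum_uniq.
  move=> i j _ _ Eij; apply: Hf; by rewrite -(phiK (f i)) Eij phiK.
- move=> y /in_map_iff [i [<- _]]; rewrite /X -Hpz Hphi Hfd.
  have := Hball _ (@lfun_In _ a l i0); have := Hball _ (@lfun_In _ a l i).
  have := Htri' (lfun a l i0) a (lfun a l i); rewrite (Hs' (lfun a l i0) a); lra.
- move=> y z /in_map_iff [i [<- _]] /in_map_iff [j [<- _]] Hne.
  rewrite Hphi Hfd; apply: Hsep => Eij; apply: Hne; by rewrite Eij.
Qed.

Lemma max_list (A : Type) (P : list A -> Prop) K : P nil ->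
  (forall l, P l -> (length l <= K)%coq_nat) ->
  exists l, P l /\ forall l', P l' -> (length l' <= length l)%coq_nat.
Proof.
move=> P0 HK; apply: NNPP => Hn.
have Hstep : forall l, P l -> exists l', P l' /\ (length l < length l')%coq_nat.
  move=> l Pl; apply: NNPP => Hn2; apply: Hn; exists l; split => // l' Pl'.
  apply: (proj1 (Nat.nlt_ge _ _)) => Hlt; apply: Hn2; by exists l'.
have Hj : forall j, exists l, P l /\ (j <= length l)%coq_nat.
  elim=> [|j [l [Pl Hl]]]; first by exists nil; split => //; apply: Nat.le_refl.
  have [l' [Pl' Hl']] := Hstep l Pl; exists l'; split => //.
  exact: (Nat.le_lt_trans _ _ _ Hl Hl').
have [l [Pl Hl]] := Hj (S K); have := HK l Pl.
move=> H; exact: (Nat.nle_succ_diag_l K (Nat.le_trans _ _ _ Hl H)).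
Qed.

Lemma ball_cover (T' : Type) (d' : T' -> T' -> R) (a : T') (k : nat) K :
  (forall l, NoDup l -> (forall y, In y l -> d' a y <= INR k) -> (length l <= K)%coq_nat) ->
  exists l, forall y, d' a y <= INR k -> In y l.
Proof.
move=> HK.
have [l [[Hl Hb] Hmax]] := @max_list T' (fun l => NoDup l /\ forall y, In y l -> d' a y <= INR k) K
  (conj (NoDup_nil _) (fun y (H : In y nil) => False_ind _ H)) (fun l H => HK l H.1 H.2).
exists l => y Hy; apply: NNPP => Hn.
have H : (length (y :: l) <= length l)%coq_nat.
  apply: Hmax; split; first by constructor.
  by move=> z [<-|Hz] //; apply: Hb.
simpl in H; exact: (Nat.nle_succ_diag_l _ H).
Qed.

Lemma not_rep (T : Type) (d : T -> T -> R) t (Hd : is_metric d) (Hu : unbounded d)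
  (Htr : aut_transitive d) (Ht0 : 0 < t)
  (Hunc : ~ countable_set (fun r => spec d r /\ (t <= r)))
  (Htb : forall X : T -> Prop, bounded_subset d X -> t_totally_bounded d t X) :
  ~ representable (age_t d t).
Proof.
move=> [T' [d' [Hd' Hrep]]].
have [x0 _] := Hu 0.
have [f1 _] := (Hrep _).1 (age_t_single t Hd x0).
pose a : T' := f1 ord0.
have HL : forall k : nat, exists l, forall y, d' a y <= INR k -> In y l.
  move=> k; have [K HK] := ball_bound Hd Htr Htb Hd' Hrep x0 a k.
  exact: ball_cover HK.
pose L k := epsilon (inhabits (@nil T')) (fun l => forall y, d' a y <= INR k -> In y l).
have HLk : forall k y, d' a y <= INR k -> In y (L k).
  move=> k; exact: (epsilon_spec (inhabits nil) (fun l => forall y, d' a y <= INR k -> In y l) (HL k)).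
pose code y := epsilon (inhabits (0%nat, 0%nat)) (fun p => nth_error (L p.1) p.2 = Some y).
have Hcode : forall y, nth_error (L (code y).1) (code y).2 = Some y.
  move=> y; apply: (epsilon_spec (inhabits (0%nat, 0%nat)) (fun p => nth_error (L p.1) p.2 = Some y)).
  have [n Hn] := INR_archimed 1 (d' a y) Rlt_0_1.
  have [i Hi] := In_nth_error _ _ (HLk n y ltac:(lra)).
  by exists (n, i).
have Hspec : forall r, spec d r /\ t <= r -> exists p : T' * T', d' p.1 p.2 = r.
  move=> r [[x1 [y1 Exy]] Hr].
  have Hne : x1 <> y1.
    move=> E; have := proj2 (proj1 Hd x1 y1) E; lra.
  have Hnd : NoDup [:: x1; y1].
    constructor; last by constructor; [exact: List.in_nil | constructor].
    by move=> [E|[]]; apply: Hne.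
  have Hi := @lfun_inj T x1 [:: x1; y1] Hnd.
  have Hat : age_t d t (fms_of Hd Hi).
    apply: fms_of_age_t => i j Hij.
    case: i j Hij => [[|[|i]] Hi1] // [[|[|j]] Hj1] // Hij; rewrite /lfun /=.
    + by exfalso; apply: Hij; apply: ord_inj.
    + by rewrite Exy.
    + by rewrite (proj1 (proj2 Hd)) Exy.
    + by exfalso; apply: Hij; apply: ord_inj.
  have [g [_ Hg]] := (Hrep _).1 Hat.
  exists (g (@Ordinal 2 0 erefl), g (@Ordinal 2 1 erefl)); by rewrite /= Hg.
pose pr r := epsilon (inhabits (a, a)) (fun p : T' * T' => d' p.1 p.2 = r).
have Hpr : forall r, spec d r /\ t <= r -> d' (pr r).1 (pr r).2 = r.
  move=> r Hr; exact: (epsilon_spec (inhabits (a, a)) (fun p : T' * T' => d' p.1 p.2 = r) (Hspec r Hr)).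
apply: Hunc.
exists (fun r => Cantor.to_nat (Cantor.to_nat (code (pr r).1), Cantor.to_nat (code (pr r).2))).
move=> r1 r2 H1 H2 E.
have E1 := f_equal Cantor.of_nat E; rewrite !Cantor.cancel_of_to in E1.
case: E1 => Ea Eb.
have Ea' := f_equal Cantor.of_nat Ea; rewrite !Cantor.cancel_of_to in Ea'.
have Eb' := f_equal Cantor.of_nat Eb; rewrite !Cantor.cancel_of_to in Eb'.
have Ex : (pr r1).1 = (pr r2).1.
  have := Hcode (pr r1).1; rewrite Ea' Hcode; by case.
have Ey : (pr r1).2 = (pr r2).2.
  have := Hcode (pr r1).2; rewrite Eb' Hcode; by case.
by rewrite -(Hpr r1 H1) -(Hpr r2 H2) Ex Ey.
Qed.

Theorem proposition1 (T : Type) (d : T -> T -> R) (t : R) :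
  is_metric d ->
  unbounded d ->
  aut_transitive d ->
  (0 < t) ->
  ~ countable_set (fun r => spec d r /\ (t <= r)) ->
  (forall X : T -> Prop, bounded_subset d X -> t_totally_bounded d t X) ->
  ideal (age_t d t) /\
  (forall A, age_t d t A -> age d A) /\
  ~ representable (age_t d t).
Proof.
move=> Hd Hu Htr Ht0 Hunc Htb; split; [|split].
- split; [exact: age_t_iso|split; [|split]].
  + have [x0 _] := Hu 0; eexists; exact: (age_t_single t Hd x0).
  + move=> A B; exact: age_t_down.
  + move=> A B; exact: age_t_join Hd Hu Htr Ht0 A B.
- by move=> A [].
- exact: not_rep Hd Hu Htr Ht0 Hunc Htb.
Qed.
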